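(* There is a deterministic subcubic reduction from the Zero Weight Triangle Parity problem to the Negative Weight Triangle Parity problem.
   Context: Input graphs have $n$ vertices and integer edge weights in $[-M,M]$, $M=\mathrm{poly}(n)$. A triangle is a set of three pairwise adjacent vertices; its weight is the sum of its three edge weights. Zero Weight Triangle Parity: decide whether the number of triangles of weight exactly $0$ is even or odd. Negative Weight Triangle Parity: decide whether the number of triangles of negative weight is even or odd. A subcubic reduction from P to Q is an algorithm solving P on size-$n$ instances using oracle calls to Q on instances of sizes $n_1,\dots,n_t$ such that for every $\varepsilon>0$ there is $\varepsilon'>0$ with the total time, counting each oracle call of size $n_i$ as $n_i^{3-\varepsilon}$, bounded by $O(n^{3-\varepsilon'})$. *)

(* Defs.v *)
(* A concrete deterministic word-RAM with an oracle
   instruction, used to state "deterministic subcubic reduction". *)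
From Stdlib Require Import Bool ZArith List Reals Arith.
Import ListNotations.

Definition triples (n : nat) : list (nat * nat * nat) :=
  flat_map (fun i => flat_map (fun j => map (fun k => (i, j, k)) (seq 0 n))
                              (seq 0 n)) (seq 0 n).

Definition tri_count (n : nat) (E : nat -> nat -> bool) (w : nat -> nat -> Z)
  (P : Z -> bool) : nat :=
  length (filter (fun t => match t with (i, j, k) =>
     (i <? j) && (j <? k) && E i j && E i k && E j k
     && P (w i j + w i k + w j k)%Z end) (triples n)).

Definition zero_tri_count n E w := tri_count n E w (fun s => Z.eqb s 0).
Definition neg_tri_count  n E w := tri_count n E w (fun s => Z.ltb s 0).

Definition valid_input (c n : nat) (E : nat -> nat -> bool)
  (w : nat -> nat -> Z) : Prop :=
  (forall i j, i < n -> j < n -> E i j = E j i /\ w i j = w j i) /\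
  (forall i, i < n -> E i i = false) /\
  (forall i j, i < n -> j < n -> E i j = true ->
     (Z.abs (w i j) <= Z.of_nat (n + 1) ^ Z.of_nat c)%Z).

Definition memory := nat -> Z.

Definition upd (m : memory) (a : nat) (v : Z) : memory :=
  fun x => if Nat.eqb x a then v else m x.

(* Register arguments are constant cell addresses; indirect access through
   ILoad/IStore.  IOracle d a: the instance is stored at base address M[a]
   (size m := M[base], adjacency bits, then weights, same layout as the input);
   the oracle's answer (parity of negative triangles) is stored in M[d]. *)
Inductive instr : Type :=
| IConst  (d : nat) (v : Z)
| IAdd    (d a b : nat)
| ISub    (d a b : nat)
| IMul    (d a b : nat)
| IDiv    (d a b : nat)
| IMod    (d a b : nat)
| ILoad   (d a : nat)          (* M[d] := M[M[a]] *)
| IStore  (a s : nat)          (* M[M[a]] := M[s] *)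
| IJz     (a : nat) (t : nat)
| IJmp    (t : nat)
| IOracle (d a : nat)
| IHalt.

(* Input layout: M[0] = n; M[1 + i*n + j] = adjacency bit;
   M[1 + n*n + i*n + j] = weight of edge ij (0 if no edge); else 0. *)
Definition encode (n : nat) (E : nat -> nat -> bool) (w : nat -> nat -> Z)
  : memory := fun a =>
  if Nat.eqb a 0 then Z.of_nat n
  else if a <=? n * n then
    let t := a - 1 in if E (t / n) (t mod n) then 1%Z else 0%Z
  else if a <=? 2 * (n * n) then
    let t := a - 1 - n * n in
    if E (t / n) (t mod n) then w (t / n) (t mod n) else 0%Z
  else 0%Z.

Definition inst_size (m : memory) (b : nat) : nat := Z.to_nat (m b).
Definition inst_E (m : memory) (b : nat) : nat -> nat -> bool :=
  fun i j => negb (Z.eqb (m (b + 1 + i * inst_size m b + j)) 0).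
Definition inst_w (m : memory) (b : nat) : nat -> nat -> Z :=
  fun i j => m (b + 1 + inst_size m b * inst_size m b
                  + i * inst_size m b + j).

Definition oracle_answer (m : memory) (b : nat) : Z :=
  if Nat.odd (neg_tri_count (inst_size m b) (inst_E m b) (inst_w m b))
  then 1%Z else 0%Z.

(* Word bound: every written value must have absolute value <= B
   (words of O(log n) bits); addresses must be nonnegative. *)
Definition wr (B : Z) (d : nat) (v : Z) (m : memory) : option memory :=
  if (Z.abs v <=? B)%Z then Some (upd m d v) else None.

Definition addr (v : Z) : option nat :=
  if (0 <=? v)%Z then Some (Z.to_nat v) else None.

(* One step: None = stuck (error); Some (inl (pc', m', oracle sizes)) =
   continue; Some (inr m) = halted. *)
Definition step (prog : list instr) (B : Z) (pc : nat) (m : memory)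
  : option ((nat * memory * list nat) + memory) :=
  match nth_error prog pc with
  | None => None
  | Some i =>
    let cont := fun om => option_map (fun m' => inl (S pc, m', [])) om in
    match i with
    | IConst d v => cont (wr B d v m)
    | IAdd d a b => cont (wr B d (m a + m b)%Z m)
    | ISub d a b => cont (wr B d (m a - m b)%Z m)
    | IMul d a b => cont (wr B d (m a * m b)%Z m)
    | IDiv d a b => cont (wr B d (m a / m b)%Z m)
    | IMod d a b => cont (wr B d (m a mod m b)%Z m)
    | ILoad d a =>
        match addr (m a) with
        | Some x => cont (wr B d (m x) m) | None => None end
    | IStore a s =>
        match addr (m a) with
        | Some x => cont (wr B x (m s) m) | None => None end
    | IJz a t => Some (inl (if Z.eqb (m a) 0 then t else S pc, m, []))
    | IJmp t => Some (inl (t, m, []))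
    | IOracle d a =>
        match addr (m a) with
        | Some b => option_map (fun m' => inl (S pc, m', [inst_size m b]))
                      (wr B d (oracle_answer m b) m)
        | None => None end
    | IHalt => Some (inr m)
    end
  end.

Fixpoint run (prog : list instr) (B : Z) (fuel : nat) (pc : nat) (m : memory)
  : option (memory * nat * list nat) :=
  match fuel with
  | O => None
  | S f =>
    match step prog B pc m with
    | None => None
    | Some (inr m') => Some (m', 1, [])
    | Some (inl (pc', m', qs)) =>
        match run prog B f pc' m' with
        | None => None
        | Some (mf, t, qs') => Some (mf, S t, qs ++ qs')
        end
    end
  end.

Definition word_bound (K n : nat) : Z := (Z.of_nat (n + 2) ^ Z.of_nat K)%Z.

Definition cost (eps : R) (t : nat) (qs : list nat) : R :=
  (INR t + fold_right (fun q acc => Rpower (INR q) (3 - eps) + acc) 0 qs)%R.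

Definition subcubic_reduction_ZWTP_to_NWTP (c : nat) : Prop :=
  exists (prog : list instr) (K : nat),
    (forall n E w, valid_input c n E w ->
       exists fuel mf t qs,
         run prog (word_bound K n) fuel 0 (encode n E w) = Some (mf, t, qs) /\
         mf 0 = (if Nat.odd (zero_tri_count n E w) then 1%Z else 0%Z)) /\
    (forall eps : R, (0 < eps)%R ->
       exists eps' : R, (0 < eps')%R /\
       exists (C : R) (n0 : nat),
         forall n E w fuel mf t qs, n0 <= n -> valid_input c n E w ->
           run prog (word_bound K n) fuel 0 (encode n E w) = Some (mf, t, qs) ->
           (cost eps t qs <= C * Rpower (INR n) (3 - eps'))%R).

(* Main.v *)
Require Import Defs.
From Stdlib Require Import ZArith List Reals Arith Lia Lra Bool FunctionalExtensionality.
Import ListNotations.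

Inductive steps (prog : list instr) (B : Z) : nat -> memory -> nat -> list nat -> nat -> memory -> Prop :=
| st0 : forall pc m, steps prog B pc m 0 [] pc m
| stS : forall pc m pc1 m1 q k qs pc' m',
    step prog B pc m = Some (inl (pc1, m1, q)) ->
    steps prog B pc1 m1 k qs pc' m' ->
    steps prog B pc m (S k) (q ++ qs) pc' m'.

Lemma stS' prog B pc m pc1 m1 q k qs qs2 pc' m' :
    step prog B pc m = Some (inl (pc1, m1, q)) ->
    steps prog B pc1 m1 k qs pc' m' -> qs2 = q ++ qs ->
    steps prog B pc m (S k) qs2 pc' m'.
Proof. intros; subst; econstructor; eauto. Qed.

Lemma steps_trans prog B pc m k1 qs1 pc1 m1 k2 qs2 pc2 m2 :
  steps prog B pc m k1 qs1 pc1 m1 -> steps prog B pc1 m1 k2 qs2 pc2 m2 ->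
  steps prog B pc m (k1 + k2) (qs1 ++ qs2) pc2 m2.
Proof.
  induction 1; intros; simpl; auto.
  rewrite <- app_assoc. econstructor; eauto.
Qed.

Lemma steps_run prog B pc m k qs pc' m' :
  steps prog B pc m k qs pc' m' -> forall f,
  run prog B (k + f) pc m = match run prog B f pc' m' with
    None => None | Some (mf, t, qs') => Some (mf, k + t, qs ++ qs') end.
Proof.
  induction 1; intros f.
  - simpl. destruct (run prog B f pc m) as [[[mf t] qs']|]; reflexivity.
  - simpl. rewrite H. rewrite IHsteps.
    destruct (run prog B f pc' m') as [[[mf t] qs']|]; simpl; auto.
    rewrite app_assoc. reflexivity.
Qed.

Lemma steps_run_le prog B pc m k qs pc' m' :
  steps prog B pc m k qs pc' m' -> forall f, f <= k -> run prog B f pc m = None.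
Proof.
  induction 1; intros f Hf.
  - assert (f = 0) by lia; subst; reflexivity.
  - destruct f; [reflexivity|]. simpl. rewrite H. rewrite IHsteps by lia. reflexivity.
Qed.

Lemma run_halt prog B pc m f : nth_error prog pc = Some IHalt ->
  run prog B (S f) pc m = Some (m, 1, []).
Proof. intros H. simpl. unfold step. rewrite H. reflexivity. Qed.

Lemma upd_eq m a v : upd m a v a = v.
Proof. unfold upd. rewrite Nat.eqb_refl. reflexivity. Qed.
Lemma upd_ne m a v x : x <> a -> upd m a v x = m x.
Proof. intros H. unfold upd. destruct (Nat.eqb_spec x a); congruence. Qed.

Lemma wr_ok B d v m : (Z.abs v <= B)%Z -> wr B d v m = Some (upd m d v).
Proof. intros H. unfold wr. apply Z.leb_le in H. rewrite H. reflexivity. Qed.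

Lemma addr_ok x : addr (Z.of_nat x) = Some x.
Proof. unfold addr. assert (H: (0 <=? Z.of_nat x)%Z = true) by (apply Z.leb_le; lia).
  rewrite H. rewrite Nat2Z.id. reflexivity. Qed.


Lemma step_const prog B pc m d v : nth_error prog pc = Some (IConst d v) ->
  (Z.abs v <= B)%Z -> step prog B pc m = Some (inl (S pc, upd m d v, [])).
Proof. intros H1 H2. unfold step. rewrite H1. rewrite wr_ok; auto. Qed.
Lemma step_add prog B pc m d a b v : nth_error prog pc = Some (IAdd d a b) ->
  (m a + m b)%Z = v -> (Z.abs v <= B)%Z -> step prog B pc m = Some (inl (S pc, upd m d v, [])).
Proof. intros H1 H0 H2. unfold step. rewrite H1. subst. rewrite wr_ok; auto. Qed.
Lemma step_sub prog B pc m d a b v : nth_error prog pc = Some (ISub d a b) ->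
  (m a - m b)%Z = v -> (Z.abs v <= B)%Z -> step prog B pc m = Some (inl (S pc, upd m d v, [])).
Proof. intros H1 H0 H2. unfold step. rewrite H1. subst. rewrite wr_ok; auto. Qed.
Lemma step_mul prog B pc m d a b v : nth_error prog pc = Some (IMul d a b) ->
  (m a * m b)%Z = v -> (Z.abs v <= B)%Z -> step prog B pc m = Some (inl (S pc, upd m d v, [])).
Proof. intros H1 H0 H2. unfold step. rewrite H1. subst. rewrite wr_ok; auto. Qed.
Lemma step_div prog B pc m d a b v : nth_error prog pc = Some (IDiv d a b) ->
  (m a / m b)%Z = v -> (Z.abs v <= B)%Z -> step prog B pc m = Some (inl (S pc, upd m d v, [])).
Proof. intros H1 H0 H2. unfold step. rewrite H1. subst. rewrite wr_ok; auto. Qed.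
Lemma step_mod prog B pc m d a b v : nth_error prog pc = Some (IMod d a b) ->
  (m a mod m b)%Z = v -> (Z.abs v <= B)%Z -> step prog B pc m = Some (inl (S pc, upd m d v, [])).
Proof. intros H1 H0 H2. unfold step. rewrite H1. subst. rewrite wr_ok; auto. Qed.
Lemma step_load prog B pc m d a x v : nth_error prog pc = Some (ILoad d a) ->
  m a = Z.of_nat x -> m x = v -> (Z.abs v <= B)%Z ->
  step prog B pc m = Some (inl (S pc, upd m d v, [])).
Proof. intros H1 H0 H3 H2. unfold step. rewrite H1, H0, addr_ok. subst. rewrite wr_ok; auto. Qed.
Lemma step_store prog B pc m a s x v : nth_error prog pc = Some (IStore a s) ->
  m a = Z.of_nat x -> m s = v -> (Z.abs v <= B)%Z ->
  step prog B pc m = Some (inl (S pc, upd m x v, [])).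
Proof. intros H1 H0 H3 H2. unfold step. rewrite H1, H0, addr_ok. subst. rewrite wr_ok; auto. Qed.
Lemma step_jzt prog B pc m a t : nth_error prog pc = Some (IJz a t) ->
  m a = 0%Z -> step prog B pc m = Some (inl (t, m, [])).
Proof. intros H1 H0. unfold step. rewrite H1, H0. reflexivity. Qed.
Lemma step_jzf prog B pc m a t : nth_error prog pc = Some (IJz a t) ->
  m a <> 0%Z -> step prog B pc m = Some (inl (S pc, m, [])).
Proof. intros H1 H0. unfold step. rewrite H1. apply Z.eqb_neq in H0. rewrite H0. reflexivity. Qed.
Lemma step_jmp prog B pc m t : nth_error prog pc = Some (IJmp t) ->
  step prog B pc m = Some (inl (t, m, [])).
Proof. intros H1. unfold step. rewrite H1. reflexivity. Qed.
Lemma step_oracle prog B pc m d a b v s : nth_error prog pc = Some (IOracle d a) ->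
  m a = Z.of_nat b -> oracle_answer m b = v -> inst_size m b = s -> (Z.abs v <= B)%Z ->
  step prog B pc m = Some (inl (S pc, upd m d v, [s])).
Proof. intros H1 H0 H3 H4 H2. unfold step. rewrite H1, H0, addr_ok. subst. rewrite wr_ok; auto. Qed.

Lemma in_triples n i j k : In (i, j, k) (triples n) -> i < n /\ j < n /\ k < n.
Proof.
  unfold triples. intros H.
  apply in_flat_map in H as [i' [Hi H]].
  apply in_flat_map in H as [j' [Hj H]].
  apply in_map_iff in H as [k' [Heq Hk]]. inversion Heq; subst.
  apply in_seq in Hi, Hj, Hk. lia.
Qed.

Lemma divmod_h n i j : j < n -> (i * n + j) / n = i /\ (i * n + j) mod n = j.
Proof.
  intros Hj. split.
  - rewrite Nat.div_add_l by lia. rewrite Nat.div_small by lia. lia.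
  - replace (i * n + j) with (j + i * n) by lia. rewrite Nat.Div0.mod_add.
    apply Nat.mod_small; lia.
Qed.

Lemma encode_adj n E w i j : i < n -> j < n ->
  encode n E w (1 + i * n + j) = if E i j then 1%Z else 0%Z.
Proof.
  intros Hi Hj. unfold encode.
  replace (1 + i * n + j =? 0) with false by (symmetry; apply Nat.eqb_neq; lia).
  replace (1 + i * n + j <=? n * n) with true by (symmetry; apply Nat.leb_le; nia).
  replace (1 + i * n + j - 1) with (i * n + j) by lia.
  destruct (divmod_h n i j Hj) as [-> ->]. reflexivity.
Qed.

Lemma encode_wt n E w i j : i < n -> j < n ->
  encode n E w (1 + n * n + i * n + j) = if E i j then w i j else 0%Z.
Proof.
  intros Hi Hj. unfold encode.
  replace (1 + n * n + i * n + j =? 0) with false by (symmetry; apply Nat.eqb_neq; lia).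
  replace (1 + n * n + i * n + j <=? n * n) with false by (symmetry; apply Nat.leb_gt; nia).
  replace (1 + n * n + i * n + j <=? 2 * (n * n)) with true by (symmetry; apply Nat.leb_le; nia).
  replace (1 + n * n + i * n + j - 1 - n * n) with (i * n + j) by lia.
  destruct (divmod_h n i j Hj) as [-> ->]. reflexivity.
Qed.

Lemma encode_bound c n E w x : valid_input c n E w ->
  (Z.abs (encode n E w x) <= Z.of_nat n + (Z.of_nat n + 1) ^ Z.of_nat c)%Z.
Proof.
  intros [_ [_ Hb]].
  assert (Hp : (1 <= (Z.of_nat n + 1) ^ Z.of_nat c)%Z).
  { pose proof (Z.pow_pos_nonneg (Z.of_nat n + 1) (Z.of_nat c)). lia. }
  unfold encode.
  destruct (x =? 0) eqn:Hx0; [lia|]. apply Nat.eqb_neq in Hx0.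
  destruct (x <=? n * n) eqn:Hx1; [destruct (E _ _); lia|].
  destruct (x <=? 2 * (n * n)) eqn:H2; [|lia].
  destruct (n =? 0) eqn:Hn0.
  - apply Nat.eqb_eq in Hn0. subst n. apply Nat.leb_le in H2. simpl in H2. lia.
  - apply Nat.eqb_neq in Hn0. apply Nat.leb_le in H2. apply Nat.leb_gt in Hx1.
    destruct (E _ _) eqn:HE; [|lia].
    assert (Hlt : x - 1 - n * n < n * n) by lia.
    pose proof (Nat.Div0.div_lt_upper_bound (x - 1 - n*n) n n ltac:(lia)).
    pose proof (Nat.mod_upper_bound (x - 1 - n*n) n ltac:(lia)).
    specialize (Hb _ _ H H0 HE). rewrite Nat2Z.inj_add in Hb. simpl in Hb. lia.
Qed.

Lemma oracle_gen n (E : nat -> nat -> bool) (w' : nat -> nat -> Z) (m : memory) :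
  m 0 = Z.of_nat n ->
  (forall i j, i < j -> j < n -> m (1 + i * n + j) = if E i j then 1%Z else 0%Z) ->
  (forall i j, i < j -> j < n -> E i j = true -> m (1 + n * n + i * n + j) = w' i j) ->
  oracle_answer m 0 = if Nat.odd (neg_tri_count n E w') then 1%Z else 0%Z.
Proof.
  intros H0 H1 H2. unfold oracle_answer, inst_E, inst_w, inst_size.
  rewrite H0, Nat2Z.id.
  replace (neg_tri_count n _ _) with (neg_tri_count n E w'); [reflexivity|].
  unfold neg_tri_count, tri_count. symmetry. f_equal. apply filter_ext_in.
  intros [[i j] k] Hin. apply in_triples in Hin.
  destruct (i <? j) eqn:Hij; simpl; [|reflexivity].
  destruct (j <? k) eqn:Hjk; simpl; [|reflexivity].
  apply Nat.ltb_lt in Hij, Hjk.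
  replace (S (i * n + j)) with (1 + i * n + j) by lia.
  replace (S (i * n + k)) with (1 + i * n + k) by lia.
  replace (S (j * n + k)) with (1 + j * n + k) by lia.
  replace (S (n * n + i * n + j)) with (1 + n * n + i * n + j) by lia.
  replace (S (n * n + i * n + k)) with (1 + n * n + i * n + k) by lia.
  replace (S (n * n + j * n + k)) with (1 + n * n + j * n + k) by lia.
  rewrite !H1 by lia.
  destruct (E i j) eqn:E1, (E i k) eqn:E2, (E j k) eqn:E3; try reflexivity.
  rewrite !H2 by (auto; lia). reflexivity.
Qed.

Lemma tri_ext n E w w' P Q :
  (forall i j k, P (w' i j + w' i k + w' j k)%Z = Q (w i j + w i k + w j k)%Z) ->
  tri_count n E w' P = tri_count n E w Q.
Proof.
  intros H. unfold tri_count. f_equal. apply filter_ext. intros [[i j] k]. rewrite H. reflexivity.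
Qed.

Lemma tri_split n E w P Q R : (forall s, P s = Q s || R s) -> (forall s, Q s && R s = false) ->
  tri_count n E w P = tri_count n E w Q + tri_count n E w R.
Proof.
  intros HP HQR. unfold tri_count.
  induction (triples n) as [|[[i j] k] l IH]; simpl; auto.
  rewrite HP. specialize (HQR (w i j + w i k + w j k)%Z).
  destruct ((i <? j) && (j <? k) && E i j && E i k && E j k); simpl; [|exact IH].
  destruct (Q _), (R _); simpl in *; try discriminate; rewrite IH; lia.
Qed.

Lemma neg4 n E w :
  neg_tri_count n E (fun i j => 4 * w i j - 1)%Z = zero_tri_count n E w + neg_tri_count n E w.
Proof.
  unfold neg_tri_count, zero_tri_count.
  rewrite (tri_ext n E w _ _ (fun s => s <=? 0)%Z).
  - apply tri_split.
    + intros s. destruct (Z.leb_spec s 0), (Z.eqb_spec s 0), (Z.ltb_spec s 0); simpl; auto; lia.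
    + intros s. destruct (Z.eqb_spec s 0), (Z.ltb_spec s 0); simpl; auto; lia.
  - intros i j k. destruct (Z.leb_spec (w i j + w i k + w j k) 0), (Z.ltb_spec (4 * w i j - 1 + (4 * w i k - 1) + (4 * w j k - 1)) 0); auto; lia.
Qed.

Lemma small_zero n E w : n < 3 -> zero_tri_count n E w = 0.
Proof.
  intros H. destruct n as [|[|[|n]]]; try lia; reflexivity.
Qed.

Definition prog : list instr := [
 (*0*) IJz 0 57; IConst 1 1; ISub 1 0 1; IJz 1 57; IConst 1 2; ISub 1 0 1; IJz 1 57;
 (*7*) IConst 1 0; IOracle 1 1; IAdd 0 0 0; IAdd 0 0 1; IMul 1 0 0;
 (*12*) IStore 1 2; IConst 2 1; IAdd 1 1 2; IStore 1 3; IAdd 1 1 2; IStore 1 4;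
 (*18*) IAdd 1 1 2; IStore 1 5; IAdd 3 2 2; IMod 5 0 3; IDiv 0 0 3; IMul 3 0 0;
 (*24*) IAdd 1 3 3; IAdd 1 1 3; IStore 1 5; IAdd 1 3 3;
 (*28*) ISub 4 1 3; IJz 4 37; ILoad 4 1; IAdd 4 4 4; IAdd 4 4 4; ISub 4 4 2;
 (*34*) IStore 1 4; ISub 1 1 2; IJmp 28;
 (*37*) IAdd 4 0 0; IAdd 4 4 5; IMul 1 4 4; IConst 5 1; ILoad 2 1; IAdd 1 1 5;
 (*43*) ILoad 3 1; IAdd 1 1 5; ILoad 4 1; IAdd 1 1 5; ILoad 5 1; IConst 1 0;
 (*49*) IOracle 1 1; IMul 2 0 0; IAdd 3 2 2; IAdd 3 3 2; ILoad 4 3; ISub 2 1 4;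
 (*55*) IMul 0 2 2; IHalt; IConst 0 0; IHalt ].

Definition par (k : nat) : Z := if Nat.odd k then 1%Z else 0%Z.

Lemma Wpos c n : (1 <= (Z.of_nat n + 1) ^ Z.of_nat c)%Z.
Proof. pose proof (Z.pow_pos_nonneg (Z.of_nat n + 1) (Z.of_nat c)). lia. Qed.

Lemma bnd c n v : 3 <= n ->
  (Z.abs v <= 4 * (Z.of_nat n + 1)^Z.of_nat c + 4 * (Z.of_nat n+1)*(Z.of_nat n+1) + 4 * Z.of_nat n + 16)%Z ->
  (Z.abs v <= word_bound (c+3) n)%Z.
Proof.
  intros Hn H. unfold word_bound.
  rewrite (Nat2Z.inj_add c 3), Z.pow_add_r by lia.
  assert (HX : ((Z.of_nat n + 1) ^ Z.of_nat c <= Z.of_nat (n+2) ^ Z.of_nat c)%Z).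
  { apply Z.pow_le_mono_l. lia. }
  pose proof (Wpos c n).
  replace (Z.of_nat (n+2) ^ Z.of_nat 3)%Z with ((Z.of_nat n + 2) * (Z.of_nat n + 2) * (Z.of_nat n + 2))%Z
    by (rewrite Nat2Z.inj_add; change (Z.of_nat 3) with 3%Z; change (Z.of_nat 2) with 2%Z; ring).
  assert (Hn' : (3 <= Z.of_nat n)%Z) by lia.
  set (X := (Z.of_nat (n + 2) ^ Z.of_nat c)%Z) in *.
  set (W := ((Z.of_nat n + 1) ^ Z.of_nat c)%Z) in *.
  nia.
Qed.

Ltac rd := repeat (first [rewrite upd_eq | rewrite upd_ne by lia]).
Ltac bd := apply bnd; [assumption | ].

Lemma par01 k : par k = 0%Z \/ par k = 1%Z.
Proof. unfold par. destruct (Nat.odd k); auto. Qed.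

Lemma phase1 c n E w : valid_input c n E w -> 3 <= n ->
  exists m qs, steps prog (word_bound (c+3) n) 0 (encode n E w) 9 qs 9 m /\ qs = [n] /\
   m 0 = Z.of_nat n /\ m 1 = par (neg_tri_count n E w) /\
   forall x, x <> 1 -> m x = encode n E w x.
Proof.
  intros Hv Hn.
  assert (He0 : encode n E w 0 = Z.of_nat n) by reflexivity.
  pose proof (Wpos c n) as HW.
  pose proof (par01 (neg_tri_count n E w)) as Hp.
  do 2 eexists. split.
  { eapply stS. { eapply step_jzf; [reflexivity| rewrite He0; lia]. }
    eapply stS. { eapply step_const; [reflexivity| bd; lia]. }
    eapply stS. { eapply step_sub with (v := (Z.of_nat n - 1)%Z); [reflexivity| rd; rewrite He0; lia| bd; lia]. }
    eapply stS. { eapply step_jzf; [reflexivity| rd; lia]. }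
    eapply stS. { eapply step_const; [reflexivity| bd; lia]. }
    eapply stS. { eapply step_sub with (v := (Z.of_nat n - 2)%Z); [reflexivity| rd; rewrite He0; lia| bd; lia]. }
    eapply stS. { eapply step_jzf; [reflexivity| rd; lia]. }
    eapply stS. { eapply step_const; [reflexivity| bd; lia]. }
    eapply stS. { eapply step_oracle with (b := 0) (v := par (neg_tri_count n E w)) (s := n).
      - reflexivity.
      - rd. reflexivity.
      - apply oracle_gen.
        + rd. exact He0.
        + intros i j Hij Hj. rd. apply encode_adj; lia.
        + intros i j Hij Hj HE. rd. rewrite encode_wt by lia. rewrite HE. reflexivity.
      - unfold inst_size. rd. rewrite He0. apply Nat2Z.id.
      - bd. lia. }
    apply st0. }
  split; [reflexivity|]. split; [rd; exact He0|]. split; [rd; reflexivity|].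
  intros x Hx. rd. reflexivity.
Qed.

Definition Inv n E w (bn Hh k : nat) (m : memory) : Prop :=
  m 0 = Z.of_nat n /\ m 1 = Z.of_nat (n*n + k) /\ m 2 = 1%Z /\ m 3 = Z.of_nat (n*n) /\
  m 5 = Z.of_nat bn /\ m (n*n + n*n + n*n) = Z.of_nat bn /\
  m Hh = encode n E w 2 /\ m (Hh+1) = encode n E w 3 /\ m (Hh+2) = encode n E w 4 /\
  m (Hh+3) = encode n E w 5 /\
  (forall x, 6 <= x <= n*n + k -> m x = encode n E w x) /\
  (forall x, n*n + k < x <= n*n + n*n -> m x = (4 * encode n E w x - 1)%Z).

Lemma modh n bn : bn <= 1 -> (Z.of_nat (2*n+bn) mod 2 = Z.of_nat bn /\ Z.of_nat (2*n+bn) / 2 = Z.of_nat n)%Z.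
Proof.
  intros H. split.
  - symmetry. apply (Z.mod_unique _ _ (Z.of_nat n)); lia.
  - symmetry. apply (Z.div_unique _ _ _ (Z.of_nat bn)); lia.
Qed.

Lemma phase2 c n E w m9 bn Hh : valid_input c n E w -> 3 <= n -> bn <= 1 ->
  Hh = (2*n+bn)*(2*n+bn) ->
  m9 0 = Z.of_nat n -> m9 1 = Z.of_nat bn -> (forall x, x <> 1 -> m9 x = encode n E w x) ->
  exists m qs, steps prog (word_bound (c+3) n) 9 m9 19 qs 28 m /\ qs = [] /\
   Inv n E w bn Hh (n*n) m.
Proof.
  intros Hv Hn Hb HH H0 H1 Hf.
  pose proof (Wpos c n) as HW.
  assert (HN : 9 <= n*n) by nia.
  assert (HHN : 4 * (n*n) <= Hh) by nia.
  assert (HHZ : (Z.of_nat Hh + 3 <= 4*(Z.of_nat n+1)*(Z.of_nat n+1))%Z) by (subst Hh; nia).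
  pose proof (modh n bn Hb) as [Hmod Hdiv].
  pose proof (encode_bound c n E w 2 Hv) as Hb2.
  pose proof (encode_bound c n E w 3 Hv) as Hb3.
  pose proof (encode_bound c n E w 4 Hv) as Hb4.
  pose proof (encode_bound c n E w 5 Hv) as Hb5.
  do 2 eexists. split.
  { eapply stS. { eapply step_add with (v := Z.of_nat (2*n)); [reflexivity| rd; lia| bd; lia]. }
    eapply stS. { eapply step_add with (v := Z.of_nat (2*n+bn)); [reflexivity| rd; lia| bd; lia]. }
    eapply stS. { eapply step_mul with (v := Z.of_nat Hh); [reflexivity| rd; subst Hh; lia| bd; lia]. }
    eapply stS. { eapply step_store with (x := Hh) (v := encode n E w 2); [reflexivity| rd; reflexivity| rd; apply Hf; lia| bd; lia]. }
    eapply stS. { eapply step_const; [reflexivity| bd; lia]. }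
    eapply stS. { eapply step_add with (v := Z.of_nat (Hh+1)); [reflexivity| rd; lia| bd; lia]. }
    eapply stS. { eapply step_store with (x := Hh+1) (v := encode n E w 3); [reflexivity| rd; reflexivity| rd; apply Hf; lia| bd; lia]. }
    eapply stS. { eapply step_add with (v := Z.of_nat (Hh+2)); [reflexivity| rd; lia| bd; lia]. }
    eapply stS. { eapply step_store with (x := Hh+2) (v := encode n E w 4); [reflexivity| rd; reflexivity| rd; apply Hf; lia| bd; lia]. }
    eapply stS. { eapply step_add with (v := Z.of_nat (Hh+3)); [reflexivity| rd; lia| bd; lia]. }
    eapply stS. { eapply step_store with (x := Hh+3) (v := encode n E w 5); [reflexivity| rd; reflexivity| rd; apply Hf; lia| bd; lia]. }
    eapply stS. { eapply step_add with (v := 2%Z); [reflexivity| rd; lia| bd; lia]. }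
    eapply stS. { eapply step_mod with (v := Z.of_nat bn); [reflexivity| rd; exact Hmod| bd; lia]. }
    eapply stS. { eapply step_div with (v := Z.of_nat n); [reflexivity| rd; exact Hdiv| bd; lia]. }
    eapply stS. { eapply step_mul with (v := Z.of_nat (n*n)); [reflexivity| rd; lia| bd; nia]. }
    eapply stS. { eapply step_add with (v := Z.of_nat (n*n+n*n)); [reflexivity| rd; lia| bd; nia]. }
    eapply stS. { eapply step_add with (v := Z.of_nat (n*n+n*n+n*n)); [reflexivity| rd; lia| bd; nia]. }
    eapply stS. { eapply step_store with (x := n*n+n*n+n*n) (v := Z.of_nat bn); [reflexivity| rd; reflexivity| rd; reflexivity| bd; lia]. }
    eapply stS. { eapply step_add with (v := Z.of_nat (n*n+n*n)); [reflexivity| rd; lia| bd; nia]. }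
    apply st0. }
  split; [reflexivity|].
  unfold Inv.
  split; [rd; reflexivity|]. split; [rd; reflexivity|]. split; [rd; reflexivity|].
  split; [rd; reflexivity|]. split; [rd; reflexivity|]. split; [rd; reflexivity|].
  split; [rd; reflexivity|]. split; [rd; reflexivity|]. split; [rd; reflexivity|].
  split; [rd; reflexivity|].
  split; [intros x Hx; rd; apply Hf; lia|].
  intros x Hx; lia.
Qed.

Lemma iter c n E w bn Hh k m : valid_input c n E w -> 3 <= n -> bn <= 1 ->
  4 * (n*n) <= Hh -> S k <= n*n -> Inv n E w bn Hh (S k) m ->
  exists m' qs, steps prog (word_bound (c+3) n) 28 m 9 qs 28 m' /\ qs = [] /\
   Inv n E w bn Hh k m'.
Proof.
  intros Hv Hn Hb HHN Hk [I0 [I1 [I2 [I3 [I5 [IG [IH0 [IH1 [IH2 [IH3 [Ilo Ihi]]]]]]]]]]].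
  pose proof (Wpos c n) as HW.
  assert (HN : 9 <= n*n) by nia.
  set (a := n*n + S k).
  assert (Ha : m a = encode n E w a) by (apply Ilo; lia).
  pose proof (encode_bound c n E w a Hv) as Hba.
  do 2 eexists. split.
  { eapply stS. { eapply step_sub with (v := Z.of_nat (S k)); [reflexivity| rd; rewrite I1, I3; lia| bd; nia]. }
    eapply stS. { eapply step_jzf; [reflexivity| rd; lia]. }
    eapply stS. { eapply step_load with (x := a) (v := encode n E w a); [reflexivity| rd; exact I1| rd; exact Ha| bd; lia]. }
    eapply stS. { eapply step_add with (v := (2 * encode n E w a)%Z); [reflexivity| rd; lia| bd; lia]. }
    eapply stS. { eapply step_add with (v := (4 * encode n E w a)%Z); [reflexivity| rd; lia| bd; lia]. }
    eapply stS. { eapply step_sub with (v := (4 * encode n E w a - 1)%Z); [reflexivity| rd; lia| bd; lia]. }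
    eapply stS. { eapply step_store with (x := a) (v := (4 * encode n E w a - 1)%Z); [reflexivity| rd; exact I1| rd; reflexivity| bd; lia]. }
    eapply stS. { eapply step_sub with (v := Z.of_nat (n*n+k)); [reflexivity| rd; rewrite I1, I2; lia| bd; nia]. }
    eapply stS. { eapply step_jmp; reflexivity. }
    apply st0. }
  split; [reflexivity|].
  unfold Inv.
  split; [rd; assumption|]. split; [rd; reflexivity|]. split; [rd; assumption|].
  split; [rd; assumption|]. split; [rd; assumption|]. split; [rd; assumption|].
  split; [rd; assumption|]. split; [rd; assumption|]. split; [rd; assumption|].
  split; [rd; assumption|].
  split; [intros x Hx; rd; apply Ilo; lia|].
  intros x Hx. destruct (Nat.eq_dec x a) as [->|Hxa].
  - rd. reflexivity.
  - rd. apply Ihi. lia.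
Qed.

Lemma loop c n E w bn Hh : valid_input c n E w -> 3 <= n -> bn <= 1 ->
  4 * (n*n) <= Hh -> forall k m, k <= n*n -> Inv n E w bn Hh k m ->
  exists m' qs, steps prog (word_bound (c+3) n) 28 m (9*k+2) qs 37 m' /\ qs = [] /\
   Inv n E w bn Hh 0 m'.
Proof.
  intros Hv Hn Hb HHN. induction k as [|k IH]; intros m Hk HI.
  - destruct HI as [I0 [I1 [I2 [I3 [I5 [IG [IH0 [IH1 [IH2 [IH3 [Ilo Ihi]]]]]]]]]]].
    do 2 eexists. split.
    { eapply stS. { eapply step_sub with (v := 0%Z); [reflexivity| rd; rewrite I1, I3; lia| bd; lia]. }
      eapply stS. { eapply step_jzt; [reflexivity| rd; reflexivity]. }
      apply st0. }
    split; [reflexivity|].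
    assert (HN : 9 <= n*n) by nia.
    unfold Inv.
    split; [rd; assumption|]. split; [rd; assumption|]. split; [rd; assumption|].
    split; [rd; assumption|]. split; [rd; assumption|]. split; [rd; assumption|].
    split; [rd; assumption|]. split; [rd; assumption|]. split; [rd; assumption|].
    split; [rd; assumption|].
    split; [intros x Hx; rd; apply Ilo; lia|].
    intros x Hx; rd; apply Ihi; lia.
  - destruct (iter c n E w bn Hh k m Hv Hn Hb HHN Hk HI) as [m1 [qs1 [Hs1 [Hq1 HI1]]]].
    destruct (IH m1 ltac:(lia) HI1) as [m2 [qs2 [Hs2 [Hq2 HI2]]]].
    exists m2, (qs1 ++ qs2). split; [|split; [subst; reflexivity|exact HI2]].
    replace (9 * S k + 2) with (9 + (9 * k + 2)) by lia.
    eapply steps_trans; eauto.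
Qed.

Lemma phase4 c n E w bn Hh m : valid_input c n E w -> 3 <= n -> bn <= 1 ->
  Hh = (2*n+bn)*(2*n+bn) -> Inv n E w bn Hh 0 m ->
  exists mf qs, steps prog (word_bound (c+3) n) 37 m 19 qs 56 mf /\ qs = [n] /\
   mf 0 = ((par (neg_tri_count n E (fun i j => 4 * w i j - 1)%Z) - Z.of_nat bn) *
           (par (neg_tri_count n E (fun i j => 4 * w i j - 1)%Z) - Z.of_nat bn))%Z.
Proof.
  intros Hv Hn Hb HH [I0 [I1 [I2 [I3 [I5 [IG [IH0 [IH1 [IH2 [IH3 [Ilo Ihi]]]]]]]]]]].
  pose proof (Wpos c n) as HW.
  assert (HN : 9 <= n*n) by nia.
  assert (HHN : 4 * (n*n) <= Hh) by nia.
  assert (HHZ : (Z.of_nat Hh + 3 <= 4*(Z.of_nat n+1)*(Z.of_nat n+1))%Z) by (subst Hh; nia).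
  pose proof (encode_bound c n E w 2 Hv) as Hb2.
  pose proof (encode_bound c n E w 3 Hv) as Hb3.
  pose proof (encode_bound c n E w 4 Hv) as Hb4.
  pose proof (encode_bound c n E w 5 Hv) as Hb5.
  set (p2 := par (neg_tri_count n E (fun i j => 4 * w i j - 1)%Z)).
  assert (Hp2 : p2 = 0%Z \/ p2 = 1%Z) by apply par01.
  do 2 eexists. split.
  { eapply stS. { eapply step_add with (v := Z.of_nat (2*n)); [reflexivity| rd; lia| bd; lia]. }
    eapply stS. { eapply step_add with (v := Z.of_nat (2*n+bn)); [reflexivity| rd; lia| bd; lia]. }
    eapply stS. { eapply step_mul with (v := Z.of_nat Hh); [reflexivity| rd; subst Hh; lia| bd; lia]. }
    eapply stS. { eapply step_const; [reflexivity| bd; lia]. }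
    eapply stS. { eapply step_load with (x := Hh) (v := encode n E w 2); [reflexivity| rd; reflexivity| rd; assumption| bd; lia]. }
    eapply stS. { eapply step_add with (v := Z.of_nat (Hh+1)); [reflexivity| rd; lia| bd; lia]. }
    eapply stS. { eapply step_load with (x := Hh+1) (v := encode n E w 3); [reflexivity| rd; reflexivity| rd; assumption| bd; lia]. }
    eapply stS. { eapply step_add with (v := Z.of_nat (Hh+2)); [reflexivity| rd; lia| bd; lia]. }
    eapply stS. { eapply step_load with (x := Hh+2) (v := encode n E w 4); [reflexivity| rd; reflexivity| rd; assumption| bd; lia]. }
    eapply stS. { eapply step_add with (v := Z.of_nat (Hh+3)); [reflexivity| rd; lia| bd; lia]. }
    eapply stS. { eapply step_load with (x := Hh+3) (v := encode n E w 5); [reflexivity| rd; reflexivity| rd; assumption| bd; lia]. }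
    eapply stS. { eapply step_const; [reflexivity| bd; lia]. }
    eapply stS. { eapply step_oracle with (b := 0) (v := p2) (s := n).
      - reflexivity.
      - rd. reflexivity.
      - apply oracle_gen.
        + rd. exact I0.
        + intros i j Hij Hj.
          assert (Hx : 2 <= 1 + i * n + j <= n * n) by nia.
          rewrite <- (encode_adj n E w i j) by lia.
          set (x := 1 + i * n + j) in *.
          destruct (Nat.eq_dec x 2) as [->|?]; [rd; reflexivity|].
          destruct (Nat.eq_dec x 3) as [->|?]; [rd; reflexivity|].
          destruct (Nat.eq_dec x 4) as [->|?]; [rd; reflexivity|].
          destruct (Nat.eq_dec x 5) as [->|?]; [rd; reflexivity|].
          rd. apply Ilo. lia.
        + intros i j Hij Hj HE.
          assert (Hx : n * n < 1 + n * n + i * n + j <= n * n + n * n) by nia.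
          rd. rewrite Ihi by lia. rewrite encode_wt by lia. rewrite HE. reflexivity.
      - unfold inst_size. rd. rewrite I0. apply Nat2Z.id.
      - bd. lia. }
    eapply stS. { eapply step_mul with (v := Z.of_nat (n*n)); [reflexivity| rd; lia| bd; nia]. }
    eapply stS. { eapply step_add with (v := Z.of_nat (n*n+n*n)); [reflexivity| rd; lia| bd; nia]. }
    eapply stS. { eapply step_add with (v := Z.of_nat (n*n+n*n+n*n)); [reflexivity| rd; lia| bd; nia]. }
    eapply stS. { eapply step_load with (x := n*n+n*n+n*n) (v := Z.of_nat bn); [reflexivity| rd; reflexivity| rd; assumption| bd; lia]. }
    eapply stS. { eapply step_sub with (v := (p2 - Z.of_nat bn)%Z); [reflexivity| rd; reflexivity| bd; lia]. }
    eapply stS. { eapply step_mul with (v := ((p2 - Z.of_nat bn) * (p2 - Z.of_nat bn))%Z); [reflexivity| rd; reflexivity| bd; nia]. }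
    apply st0. }
  split; [reflexivity|]. rd. reflexivity.
Qed.

Lemma bnd_small c n v : (Z.abs v <= 2)%Z -> (Z.abs v <= word_bound (c+3) n)%Z.
Proof.
  intros H. unfold word_bound.
  rewrite (Nat2Z.inj_add c 3), Z.pow_add_r by lia.
  assert (H1 : (1 <= Z.of_nat (n+2) ^ Z.of_nat c)%Z).
  { pose proof (Z.pow_pos_nonneg (Z.of_nat (n+2)) (Z.of_nat c)). lia. }
  assert (H2 : (8 <= Z.of_nat (n+2) ^ Z.of_nat 3)%Z).
  { change (Z.of_nat 3) with 3%Z. rewrite Nat2Z.inj_add.
    assert (H3 : (2 ^ 3 <= (Z.of_nat n + Z.of_nat 2) ^ 3)%Z) by (apply Z.pow_le_mono_l; lia).
    simpl in H3. lia. }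
  nia.
Qed.

Ltac bs := apply bnd_small; lia.

Lemma exec c n E w : valid_input c n E w ->
  exists k qs mh pcH, steps prog (word_bound (c+3) n) 0 (encode n E w) k qs pcH mh /\
   nth_error prog pcH = Some IHalt /\
   mh 0 = par (zero_tri_count n E w) /\ k <= 49 + 9 * (n*n) /\ (qs = [] \/ qs = [n; n]).
Proof.
  intros Hv.
  assert (He0 : encode n E w 0 = Z.of_nat n) by reflexivity.
  destruct (le_lt_dec 3 n) as [Hn|Hn].
  - destruct (phase1 c n E w Hv Hn) as [m9 [qs1 [Hs1 [Hq1 [H90 [H91 H9f]]]]]].
    set (bn := if Nat.odd (neg_tri_count n E w) then 1 else 0).
    assert (Hb : bn <= 1) by (unfold bn; destruct (Nat.odd _); lia).
    assert (H91' : m9 1 = Z.of_nat bn) by (rewrite H91; unfold par, bn; destruct (Nat.odd _); reflexivity).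
    destruct (phase2 c n E w m9 bn ((2*n+bn)*(2*n+bn)) Hv Hn Hb eq_refl H90 H91' H9f)
      as [m28 [qs2 [Hs2 [Hq2 HI]]]].
    assert (HHN : 4 * (n*n) <= (2*n+bn)*(2*n+bn)) by nia.
    destruct (loop c n E w bn _ Hv Hn Hb HHN (n*n) m28 (le_n _) HI) as [m37 [qs3 [Hs3 [Hq3 HI0]]]].
    destruct (phase4 c n E w bn _ m37 Hv Hn Hb eq_refl HI0) as [mf [qs4 [Hs4 [Hq4 Hmf]]]].
    exists (9 + (19 + ((9 * (n*n) + 2) + 19))), (qs1 ++ (qs2 ++ (qs3 ++ qs4))), mf, 56.
    split.
    { eapply steps_trans; [exact Hs1|]. eapply steps_trans; [exact Hs2|].
      eapply steps_trans; [exact Hs3|]. exact Hs4. }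
    split; [reflexivity|].
    split; [|split; [lia| right; subst; reflexivity]].
    rewrite Hmf. rewrite neg4. unfold par, bn. rewrite Nat.odd_add.
    destruct (Nat.odd (zero_tri_count n E w)), (Nat.odd (neg_tri_count n E w)); reflexivity.
  - rewrite (small_zero n E w Hn).
    assert (Hn' : n = 0 \/ n = 1 \/ n = 2) by lia.
    destruct Hn' as [-> | [-> | ->]].
    + do 4 eexists. split.
      { eapply stS. { eapply step_jzt; [reflexivity| exact He0]. }
        eapply stS. { eapply step_const; [reflexivity| bs]. }
        apply st0. }
      split; [reflexivity|]. split; [rd; reflexivity|]. split; [simpl; lia| left; reflexivity].
    + do 4 eexists. split.
      { eapply stS. { eapply step_jzf; [reflexivity| rewrite He0; simpl; lia]. }
        eapply stS. { eapply step_const; [reflexivity| bs]. }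
        eapply stS. { eapply step_sub with (v := 0%Z); [reflexivity| rd; rewrite He0; reflexivity| bs]. }
        eapply stS. { eapply step_jzt; [reflexivity| rd; reflexivity]. }
        eapply stS. { eapply step_const; [reflexivity| bs]. }
        apply st0. }
      split; [reflexivity|]. split; [rd; reflexivity|]. split; [simpl; lia| left; reflexivity].
    + do 4 eexists. split.
      { eapply stS. { eapply step_jzf; [reflexivity| rewrite He0; simpl; lia]. }
        eapply stS. { eapply step_const; [reflexivity| bs]. }
        eapply stS. { eapply step_sub with (v := 1%Z); [reflexivity| rd; rewrite He0; reflexivity| bs]. }
        eapply stS. { eapply step_jzf; [reflexivity| rd; lia]. }
        eapply stS. { eapply step_const; [reflexivity| bs]. }
        eapply stS. { eapply step_sub with (v := 0%Z); [reflexivity| rd; rewrite He0; reflexivity| bs]. }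
        eapply stS. { eapply step_jzt; [reflexivity| rd; reflexivity]. }
        eapply stS. { eapply step_const; [reflexivity| bs]. }
        apply st0. }
      split; [reflexivity|]. split; [rd; reflexivity|]. split; [simpl; lia| left; reflexivity].
Qed.

Lemma run_of_exec c n E w : valid_input c n E w ->
  exists k qs mh, mh 0 = par (zero_tri_count n E w) /\ k <= 49 + 9 * (n*n) /\
   (qs = [] \/ qs = [n; n]) /\
   run prog (word_bound (c+3) n) (k + 1) 0 (encode n E w) = Some (mh, k + 1, qs) /\
   forall f mf t qs', run prog (word_bound (c+3) n) f 0 (encode n E w) = Some (mf, t, qs') ->
     t = k + 1 /\ qs' = qs.
Proof.
  intros Hv. destruct (exec c n E w Hv) as [k [qs [mh [pcH [Hs [Hh [H0 [Hk Hq]]]]]]]].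
  exists k, qs, mh. split; [exact H0|]. split; [exact Hk|]. split; [exact Hq|].
  split.
  - rewrite (steps_run _ _ _ _ _ _ _ _ Hs 1). rewrite run_halt by exact Hh.
    rewrite app_nil_r. reflexivity.
  - intros f mf t qs' Hr.
    destruct (le_lt_dec f k) as [Hf|Hf].
    + rewrite (steps_run_le _ _ _ _ _ _ _ _ Hs f Hf) in Hr. discriminate.
    + destruct f as [|f]; [lia|].
      replace (S f) with (k + S (f - k)) in Hr by lia.
      rewrite (steps_run _ _ _ _ _ _ _ _ Hs) in Hr. rewrite run_halt in Hr by exact Hh.
      inversion Hr. rewrite app_nil_r. split; reflexivity.
Qed.

Theorem theorem2 : forall c : nat, subcubic_reduction_ZWTP_to_NWTP c.
Proof.
  intros c. exists prog, (c+3). split.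
  - intros n E w Hv. destruct (run_of_exec c n E w Hv) as [k [qs [mh [H0 [_ [_ [Hr _]]]]]]].
    exists (k+1), mh, (k+1), qs. split; [exact Hr| exact H0].
  - intros eps Heps. exists (Rmin eps 1). split.
    { apply Rmin_glb_lt; lra. }
    exists 61%R, 1. intros n E w fuel mf t qs Hn Hv Hr.
    destruct (run_of_exec c n E w Hv) as [k [qs0 [mh [_ [Hk [Hq [_ Huniq]]]]]]].
    destruct (Huniq _ _ _ _ Hr) as [-> ->].
    pose proof (Rmin_l eps 1). pose proof (Rmin_r eps 1).
    set (e' := Rmin eps 1) in *.
    assert (HnR : (1 <= INR n)%R) by (apply (le_INR 1); lia).
    set (X := Rpower (INR n) (3 - e')).
    assert (HX2 : (INR n * INR n <= X)%R).
    { unfold X. replace (INR n * INR n)%R with (Rpower (INR n) (INR 2)).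
      - apply Rle_Rpower; [lra|]. simpl. lra.
      - rewrite Rpower_pow by lra. simpl. ring. }
    assert (HXe : (Rpower (INR n) (3 - eps) <= X)%R) by (apply Rle_Rpower; lra).
    assert (HX1 : (1 <= X)%R) by nra.
    assert (Hk' : (INR (k + 1) <= 50 + 9 * (INR n * INR n))%R).
    { rewrite <- mult_INR. replace 50%R with (INR 50) by (simpl; lra).
      replace 9%R with (INR 9) by (simpl; lra). rewrite <- mult_INR, <- plus_INR.
      apply le_INR. lia. }
    unfold cost. destruct Hq as [-> | ->]; simpl fold_right.
    + lra.
    + fold X. lra.
Qed.
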